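(* Every nice bipartite graph $G$ satisfies $\chi'_{qm\Sigma}(G)\le 6$.
   Context: All graphs are simple and finite. A $k$-edge-coloring of $G$ is any map $c:E(G)\to\{1,\dots,k\}$ (adjacent edges may share colors). It induces $\sigma_c(v)=\sum_{u\in N(v)}c(vu)$. The coloring is neighbor sum distinguishing (NSD) if $\sigma_c(u)\ne\sigma_c(v)$ for every edge $uv$. It is quasi-majority if every vertex $v$ is incident to at most $\lceil d(v)/2\rceil$ edges of each single color. $\chi'_{qm\Sigma}(G)$ denotes the least $k$ such that $G$ has a $k$-edge-coloring that is both quasi-majority and NSD. A graph is nice if it has no connected component isomorphic to $K_2$. *)

(* Defs.v *)
From mathcomp Require Import all_boot.
Set Implicit Arguments. Unset Strict Implicit. Unset Printing Implicit Defensive.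

Definition simple_graph (V : finType) (e : rel V) : Prop :=
  symmetric e /\ irreflexive e.

Definition nbhd (V : finType) (e : rel V) (v : V) : {set V} := [set u | e v u].
Definition deg (V : finType) (e : rel V) (v : V) : nat := #|nbhd e v|.

(* An edge coloring is a symmetric function c on pairs of vertices; only its values on
   edges matter.  It is a k-edge-coloring if every edge gets a color in {1,...,k}. *)
Definition is_k_edge_coloring (V : finType) (e : rel V) (k : nat) (c : V -> V -> nat) : Prop :=
  (forall u v, e u v -> c u v = c v u) /\
  (forall u v, e u v -> 1 <= c u v <= k).

Definition sigma_c (V : finType) (e : rel V) (c : V -> V -> nat) (v : V) : nat :=
  \sum_(u in nbhd e v) c v u.

Definition nsd (V : finType) (e : rel V) (c : V -> V -> nat) : Prop :=
  forall u v, e u v -> sigma_c e c u <> sigma_c e c v.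

Definition quasi_majority (V : finType) (e : rel V) (c : V -> V -> nat) : Prop :=
  forall (v : V) (i : nat), #|[set u in nbhd e v | c v u == i]| <= uphalf (deg e v).

Definition bipartite (V : finType) (e : rel V) : Prop :=
  exists f : V -> bool, forall u v, e u v -> f u != f v.

(* nice: no connected component isomorphic to K2, i.e. no edge uv with d(u)=d(v)=1 *)
Definition nice (V : finType) (e : rel V) : Prop :=
  ~ (exists u v, [/\ e u v, deg e u = 1 & deg e v = 1]).

Definition qmSigma_le (V : finType) (e : rel V) (k : nat) : Prop :=
  exists c : V -> V -> nat,
    [/\ is_k_edge_coloring e k c, quasi_majority e c & nsd e c].

(* Main.v *)
Require Import Defs.
From mathcomp Require Import all_boot zify.
Set Implicit Arguments. Unset Strict Implicit. Unset Printing Implicit Defensive.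



Lemma L2 (a b : nat) : exists t, [/\ t < 3, (a + t) %% 3 <> 0 & (b + t) %% 3 <> 0].
Proof.
have [Ha|[Ha|Ha]] : a %% 3 = 0 \/ a %% 3 = 1 \/ a %% 3 = 2 by lia.
all: have [Hb|[Hb|Hb]] : b %% 3 = 0 \/ b %% 3 = 1 \/ b %% 3 = 2 by lia.
all: first [exists 0; split; lia | exists 1; split; lia | exists 2; split; lia].
Qed.

Section G.
Variable V : finType.
Variable e : rel V.
Hypothesis esym : symmetric e.
Hypothesis eirr : irreflexive e.

Lemma inN v u : (u \in nbhd e v) = e v u.
Proof. by rewrite /nbhd inE. Qed.

Definition sig (r : V -> V -> nat) v := \sum_(u in nbhd e v) r v u.
Definition symr (r : V -> V -> nat) := forall a b, r a b = r b a.

Lemma sum_ind1 (A : {set V}) (y : V) (t : nat) :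
  \sum_(u in A) t * (u == y) = t * (y \in A).
Proof.
rewrite -big_distrr /=; congr (_ * _).
case Ay: (y \in A).
  rewrite (bigD1 y) //= eqxx big1 // => u /andP[_ /negbTE ->] //.
rewrite big1 // => u Au; case: eqP => // Euy; by move: Au; rewrite Euy Ay.
Qed.

Lemma add_edge r x z t : symr r -> e x z -> exists r', symr r' /\
  forall w, sig r' w = sig r w + t * (w == x) + t * (w == z).
Proof.
move=> sr exz.
have xz : x != z by apply: contraTneq exz => ->; rewrite eirr.
exists (fun a b => r a b + t * (((a == x) && (b == z)) || ((a == z) && (b == x)))).
split.
  move=> a b; rewrite sr; congr (_ + t * _).
  by rewrite orbC [(b == z) && _]andbC [(b == x) && _]andbC.
move=> w; rewrite /sig big_split /= -addnA; congr (_ + _).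
case: (eqVneq w x) => [->|wx].
  rewrite (eq_bigr (fun u => t * (u == z))); last first.
    by move=> u _; rewrite (negbTE xz) /= orbF.
  by rewrite sum_ind1 inN exz (negbTE xz) muln0 addn0 muln1.
case: (eqVneq w z) => [->|wz].
  rewrite (eq_bigr (fun u => t * (u == x))); last first.
    by move=> u _; rewrite andFb orFb andTb.
  by rewrite sum_ind1 inN esym exz muln0 add0n muln1.
rewrite big1 ?muln0 // => u _.
by rewrite /= muln0.
Qed.

Variable h : V -> bool.
Hypothesis hp : forall a b, e a b -> h a != h b.

Lemma move_path p x t r : symr r -> path e x p ->
  exists r', symr r' /\ forall w, sig r' w %% 3 =
    (sig r w + t * (w == x) + (if h x == h (last x p) then 2 * t else t) * (w == last x p)) %% 3.
Proof.
elim: p x t r => [|z p IH] x t r sr /=.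
  move=> _; exists r; split => // w; rewrite eqxx.
  case: (w == x) => /=; lia.
case/andP=> exz pth.
have [r1 [sr1 H1]] := add_edge t sr exz.
have [r2 [sr2 H2]] := IH z (2 * t) r1 sr1 pth.
exists r2; split => // w; rewrite H2 H1.
have := hp exz.
case: (h x); case: (h z); case: (h (last z p)) => //= _;
case: (w == x); case: (w == z); case: (w == last z p) => /=; lia.
Qed.

Lemma move_conn x y t r : symr r -> connect e x y ->
  exists r', symr r' /\ forall w, sig r' w %% 3 =
    (sig r w + t * (w == x) + (if h x == h y then 2 * t else t) * (w == y)) %% 3.
Proof. by move=> sr /connectP [p pth ->]; exact: move_path. Qed.

End G.



Section G2.
Variable V : finType.
Variable e : rel V.
Hypothesis esym : symmetric e.
Hypothesis eirr : irreflexive e.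
Variable f : V -> bool.
Hypothesis hf : forall a b, e a b -> f a != f b.
Hypothesis hn : nice e.

Definition compT v := [set w | connect e v w && f w].
Definition gg v := if 1 < #|compT v| then f v else ~~ f v.

Let csym : connect_sym e := sym_connect_sym esym.

Lemma compT_eq u v : connect e u v -> compT u = compT v.
Proof. by move=> c; apply/setP => w; rewrite !inE (same_connect csym c). Qed.

Lemma gg_proper a b : e a b -> gg a != gg b.
Proof.
move=> eab; rewrite /gg (compT_eq (connect1 eab)).
by move: (hf eab); case: ifP => _; case: (f a); case: (f b).
Qed.

Lemma twoB v u : e v u -> exists b1 b2,
  [/\ b1 != b2, gg b1, gg b2, connect e v b1 & connect e v b2].
Proof.
move=> evu.
have gw : forall w, connect e v w ->
    gg w = (if 1 < #|compT v| then f w else ~~ f w).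
  by move=> w c; rewrite /gg (compT_eq c).
have [big|small] := boolP (1 < #|compT v|); rewrite ?big ?(negbTE small) in gw.
  case/card_gt1P: big => b1 [b2 [H1 H2 ne]].
  move: H1 H2; rewrite !inE => /andP[c1 f1] /andP[c2 f2].
  by exists b1, b2; split => //; rewrite gw.
suff [b1 [b2 [ne c1 c2 f1 f2]]] : exists b1 b2,
    [/\ b1 != b2, connect e v b1, connect e v b2, ~~ f b1 & ~~ f b2].
  by exists b1, b2; split => //; rewrite gw.
have notboth : forall b1 b2, b1 != b2 -> connect e v b1 -> connect e v b2 ->
    f b1 -> f b2 -> False.
  move=> b1 b2 ne c1 c2 f1 f2; move/negP: small; apply.
  by apply/card_gt1P; exists b1, b2; rewrite !inE c1 c2 f1 f2.
have cu : connect e v u := connect1 evu.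
have dv1 : 0 < deg e v by apply/card_gt0P; exists u; rewrite inN.
case: (ltnP 1 (deg e v)) => [dv|dv].
  move: dv; rewrite /deg (cardsD1 u) inN evu add1n ltnS => /card_gt0P [x].
  rewrite !inE => /andP [xu evx].
  have fxu : f x = f u.
    by move: (hf evx) (hf evu); case: (f v); case: (f x); case: (f u).
  have cx : connect e v x := connect1 evx.
  case fu: (f u).
    by exfalso; apply: (notboth u x _ cu cx); rewrite ?fxu ?fu // eq_sym.
  by exists u, x; rewrite eq_sym xu cu cx fxu fu.
have dv' : deg e v = 1 by apply/eqP; rewrite eqn_leq dv dv1.
have du : 1 < deg e u.
  have du1 : 0 < deg e u by apply/card_gt0P; exists v; rewrite inN esym.
  rewrite ltn_neqAle du1 andbT eq_sym; apply/eqP => du.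
  by apply: hn; exists v, u; split.
move: du; rewrite /deg (cardsD1 v) inN esym evu add1n ltnS => /card_gt0P [x].
rewrite !inE => /andP [xv eux].
have fxv : f x = f v.
  by move: (hf eux) (hf evu); case: (f v); case: (f x); case: (f u).
have cx : connect e v x := connect_trans cu (connect1 eux).
case fv: (f v).
  by exfalso; apply: (notboth v x _ (connect0 _ _) cx); rewrite ?fxv ?fv // eq_sym.
by exists v, x; rewrite eq_sym xv connect0 cx fxv fv.
Qed.

Definition bad r v := if gg v then (0 < deg e v) && (sig e r v %% 3 == 0)
  else sig e r v %% 3 != 0.

Lemma bad_eq r r' w : sig e r' w %% 3 = sig e r w %% 3 -> bad r' w = bad r w.
Proof. by rewrite /bad => ->. Qed.

Lemma sig_iso r v : deg e v = 0 -> sig e r v = 0.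
Proof.
by move/eqP; rewrite cards_eq0 => /eqP E; rewrite /sig E big_set0.
Qed.

Lemma A1 s t : s %% 3 = 0 -> (0 + t) %% 3 <> 0 -> (s + t) %% 3 <> 0.
Proof. lia. Qed.
Lemma A2 s t : (2*s + t) %% 3 <> 0 -> (s + 2*t) %% 3 <> 0.
Proof. lia. Qed.
Lemma A4 sv t : (sv + t + 2 * (sv + t)) %% 3 = 0.
Proof. lia. Qed.
Lemma A5 sb2 sv t : (2 * sb2 + sv + t) %% 3 <> 0 -> (sb2 + 2 * (sv + t)) %% 3 <> 0.
Proof. lia. Qed.
Lemma AS a b c d t (X Y Z : bool) : b %% 3 = (c + t*X + t*Y) %% 3 ->
  a %% 3 = (b + 2*(d+t)*X + 2*(d+t)*Z) %% 3 ->
  a %% 3 = (c + t*X + t*Y + 2*(d+t)*X + 2*(d+t)*Z) %% 3.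
Proof. by case: X; case: Y; case: Z => /=; lia. Qed.

Lemma step r v : symr r -> bad r v -> exists r', [/\ symr r',
  (forall w, bad r' w -> bad r w) & ~~ bad r' v].
Proof.
move=> sr bv.
have [u evu] : exists u, e v u.
  have : 0 < deg e v.
    move: bv; rewrite /bad; case: (gg v) => [/andP[] //|].
    by case: (posnP (deg e v)) => // /(sig_iso r) ->.
  by case/card_gt0P => u; rewrite inN; exists u.
have [b1 [b2 [ne g1 g2 c1 c2]]] := twoB evu.
have gp := gg_proper.
case gv: (gg v).
  have [d1 d2] : 0 < deg e v /\ sig e r v %% 3 = 0.
    by move: bv; rewrite /bad gv => /andP[-> /eqP ->].
  have [b' [b'v gb' cb']] : exists b', [/\ b' != v, gg b' & connect e v b'].
    case: (eqVneq b1 v) => [E|nb]; last by exists b1.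
    by exists b2; split => //; rewrite -E eq_sym.
  have [t [_ t1 t2]] := L2 0 (2 * sig e r b').
  have [r' [sr' H]] := move_conn esym eirr gp t sr cb'.
  exists r'; split => //; last first.
    have vb' : v != b' by rewrite eq_sym.
    rewrite /bad gv d1 /= H eqxx (negbTE vb') gv gb' /= muln0 addn0 muln1.
    by apply/eqP; exact: A1 d2 t1.
  move=> w; case: (eqVneq w v) => [->|wv] //.
  case: (eqVneq w b') => [->|wb].
    rewrite /bad gb' /= H eqxx (negbTE b'v) gv gb' /= muln0 addn0 muln1.
    by case/andP => _ /eqP /(A2 t2).
  by have := H w; rewrite (negbTE wv) (negbTE wb) !muln0 !addn0 => /bad_eq ->.
have s0 : sig e r v %% 3 <> 0 by move: bv; rewrite /bad gv => /eqP.
have [t [_ t1 t2]] := L2 (sig e r b1) (2 * sig e r b2 + sig e r v).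
have [r1 [sr1 H1]] := move_conn esym eirr gp t sr c1.
have [r2 [sr2 H2]] := move_conn esym eirr gp (2 * (sig e r v + t)) sr1 c2.
have vb1 : v != b1 by apply: contraFneq gv => ->.
have vb2 : v != b2 by apply: contraFneq gv => ->.
have b1v : b1 != v by rewrite eq_sym.
have b2v : b2 != v by rewrite eq_sym.
have ne' : b2 != b1 by rewrite eq_sym.
have S : forall w, sig e r2 w %% 3 = (sig e r w + t * (w == v) + t * (w == b1)
    + 2 * (sig e r v + t) * (w == v) + 2 * (sig e r v + t) * (w == b2)) %% 3.
  move=> w; have := H1 w; have := H2 w; rewrite gv g1 g2 /= => E2 E1.
  exact: AS E1 E2.
exists r2; split => //; last first.
  rewrite /bad gv; apply/negPn/eqP; rewrite S eqxx (negbTE vb1) (negbTE vb2).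
  by rewrite /= !muln0 !addn0 !muln1; exact: A4.
move=> w; case: (eqVneq w v) => [->|wv] //.
case: (eqVneq w b1) => [->|wb1].
  rewrite /bad g1 S eqxx (negbTE ne) (negbTE b1v) /=.
  by rewrite !muln0 !addn0 ?add0n !muln1 => /andP[_ /eqP].
case: (eqVneq w b2) => [->|wb2].
  rewrite /bad g2 S eqxx (negbTE ne') (negbTE b2v) /=.
  rewrite !muln0 !addn0 ?add0n !muln1.
  by case/andP => _ /eqP /(A5 t2).
by have := S w; rewrite (negbTE wv) (negbTE wb1) (negbTE wb2) !muln0 !addn0 => /bad_eq ->.
Qed.

Lemma fix_all n r : symr r -> #|[set v | bad r v]| <= n ->
  exists r', symr r' /\ forall v, ~~ bad r' v.
Proof.
elim: n r => [|n IH] r sr hc.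
  exists r; split => // v; apply/negP => bv.
  move: hc; rewrite leqn0 cards_eq0 => /eqP E.
  have : v \in [set v | bad r v] by rewrite inE.
  by rewrite E inE.
case: (boolP [exists v, bad r v]) => [/existsP [v bv] | nob].
  have [r' [sr' sub nb]] := step sr bv.
  apply: (IH r' sr').
  have : [set w | bad r' w] \proper [set w | bad r w].
    apply/properP; split.
      by apply/subsetP => w; rewrite !inE; exact: sub.
    by exists v; rewrite !inE.
  by move/proper_card => lt; rewrite -ltnS (leq_trans lt hc).
by exists r; split => // v; move/existsPn: nob.
Qed.

End G2.



Section G3.
Variable V : finType.
Variable e : rel V.
Hypothesis esym : symmetric e.
Hypothesis eirr : irreflexive e.

Definition validO (o : rel V) :=
  (forall a b, o a b -> e a b) /\ (forall a b, e a b -> o b a = ~~ o a b).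
Definition outd (o : rel V) v := \sum_u (o v u : nat).
Definition ind (o : rel V) v := \sum_u (o u v : nat).
Definition phiv o w := (outd o w - ind o w) + (ind o w - outd o w).
Definition phi o := \sum_w phiv o w.

Lemma sum_upd (F G : V -> nat) k : (forall u, u != k -> F u = G u) ->
  \sum_u F u + G k = \sum_u G u + F k.
Proof.
move=> H; rewrite (bigD1 k) //= [X in _ = X + _](bigD1 k) //=.
have E : \sum_(u | true && (u != k)) F u = \sum_(u | true && (u != k)) G u.
  by apply: eq_bigr => u /andP[_ uk]; exact: H.
rewrite E; set S := \sum_(i | i != k) G i.
lia.
Qed.

Definition flip (o : rel V) x y : rel V := fun a b =>
  if ((a == x) && (b == y)) || ((a == y) && (b == x)) then ~~ o a b else o a b.

Lemma flip_valid o x y : validO o -> o x y -> validO (flip o x y).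
Proof.
move=> [v1 v2] oxy; split.
  move=> a b; rewrite /flip; case: ifP => [/orP [/andP[/eqP-> /eqP->] | /andP [/eqP-> /eqP->]] | _].
  - by rewrite oxy.
  - by move=> _; rewrite esym; exact: v1.
  - exact: v1.
move=> a b eab; rewrite /flip.
have -> : ((b == x) && (a == y)) || ((b == y) && (a == x)) =
          ((a == x) && (b == y)) || ((a == y) && (b == x)).
  by rewrite orbC andbC [(b == x) && _]andbC.
by case: ifP => _; rewrite (v2 _ _ eab).
Qed.

Lemma flip_deg o x y : validO o -> o x y -> forall w,
  outd (flip o x y) w + (w == x) = outd o w + (w == y) /\
  ind (flip o x y) w + (w == y) = ind o w + (w == x).
Proof.
move=> [v1 v2] oxy w.
have xy : x != y by apply: contraTneq (v1 _ _ oxy) => ->; rewrite eirr.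
have yx : y != x by rewrite eq_sym.
have oyx : o y x = false by rewrite (v2 _ _ (v1 _ _ oxy)) oxy.
have fxy : flip o x y x y = false by rewrite /flip !eqxx /= oxy.
have fyx : flip o x y y x = true by rewrite /flip !eqxx /= orbT oyx.
have fid : forall a b, a != x -> a != y -> flip o x y a b = o a b.
  by move=> a b ax ay; rewrite /flip (negbTE ax) (negbTE ay).
have fid2 : forall a b, b != x -> b != y -> flip o x y a b = o a b.
  by move=> a b bx b_y; rewrite /flip (negbTE bx) (negbTE b_y) !andbF.
split.
  have E : forall w k, (forall u, u != k -> flip o x y w u = o w u) ->
      outd (flip o x y) w + o w k = outd o w + flip o x y w k.
    by move=> {}w k Hk; rewrite /outd; apply: sum_upd => u uk; rewrite Hk.
  case: (eqVneq w x) => [->|wx].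
    have := E x y; rewrite oxy fxy (negbTE xy) => -> //.
    by move=> u uy; rewrite /flip eqxx (negbTE uy) (negbTE xy).
  case: (eqVneq w y) => [->|wy].
    have := E y x; rewrite oyx fyx => -> //.
    by move=> u ux; rewrite /flip eqxx (negbTE ux) (negbTE yx).
  have H := E w x (fun u _ => fid w u wx wy).
  rewrite fid // in H; rewrite ?(negbTE wx) ?(negbTE wy) !addn0; exact: addIn H.
have E : forall w k, (forall u, u != k -> flip o x y u w = o u w) ->
    ind (flip o x y) w + o k w = ind o w + flip o x y k w.
  by move=> {}w k Hk; rewrite /ind; apply: sum_upd => u uk; rewrite Hk.
case: (eqVneq w y) => [->|wy].
  have := E y x; rewrite oxy fxy (negbTE yx) => -> //.
  by move=> u ux; rewrite /flip eqxx (negbTE ux) (negbTE yx) /= andbF.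
case: (eqVneq w x) => [->|wx].
  have := E x y; rewrite oyx fyx => -> //.
  by move=> u uy; rewrite /flip eqxx (negbTE uy) (negbTE xy) /= andbF.
have H := E w x (fun u _ => fid2 u w wx wy).
rewrite fid2 // in H; rewrite ?(negbTE wx) ?(negbTE wy) !addn0; exact: addIn H.
Qed.

Lemma rev_path p x o : validO o -> path o x p -> uniq (x :: p) ->
  exists o', validO o' /\ forall w,
    outd o' w + (w == x) = outd o w + (w == last x p) /\
    ind o' w + (w == last x p) = ind o w + (w == x).
Proof.
elim: p x o => [|y p IH] x o vo /=.
  by move=> _ _; exists o.
case/andP=> oxy pth /andP[xnin up].
have vo1 := flip_valid vo oxy.
have pth1 : path (flip o x y) y p.
  rewrite -(@eq_in_path _ (predC1 x) o) //.
    move=> a b; rewrite !inE /= => ax bx; rewrite /flip (negbTE ax) (negbTE bx).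
    by rewrite !andbF.
  apply/allP => z zin /=; apply: contraNneq xnin => zx; by rewrite -zx.
have [o' [vo' H]] := IH y _ vo1 pth1 up.
exists o'; split => // w.
have [F1 F2] := flip_deg vo oxy w.
have [G1 G2] := H w.
split; lia.
Qed.

Lemma dcount o v : validO o ->
  \sum_(w in [set w | connect o v w]) outd o w <=
  \sum_(w in [set w | connect o v w]) ind o w.
Proof.
move=> vo; set S := [set w | connect o v w].
have clos : forall w u, w \in S -> o w u -> u \in S.
  by move=> w u; rewrite !inE => cw owu; exact: connect_trans cw (connect1 owu).
apply: (@leq_trans (\sum_(w in S) \sum_(u in S) (o w u : nat))).
  apply: leq_sum => w wS; rewrite /outd (bigID (mem S)) /=.
  rewrite [X in _ + X]big1 ?addn0 //.
  by move=> u uS; case owu: (o w u) => //; rewrite (clos w u wS owu) in uS.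
rewrite exchange_big /=; apply: leq_sum => u uS.
by rewrite /ind [X in _ <= X](bigID (mem S)) /= leq_addr.
Qed.

Lemma step_out o v : validO o -> ind o v + 2 <= outd o v ->
  exists o', validO o' /\ phi o' < phi o.
Proof.
move=> vo hv.
have dc := dcount v vo.
set S := [set w | connect o v w] in dc.
have vS : v \in S by rewrite inE connect0.
have [y yS lty] : exists2 y, y \in S & outd o y < ind o y.
  case: (boolP [exists y in S, outd o y < ind o y]) => [/exists_inP // | /exists_inPn H].
  exfalso; move: dc; rewrite (bigD1 v) // [X in _ <= X](bigD1 v) //=.
  have : \sum_(i in S | i != v) ind o i <= \sum_(i in S | i != v) outd o i.
    by apply: leq_sum => i /andP[iS _]; rewrite leqNgt H.
  lia.
have [p' [pth' up' lst]] : exists p', [/\ path o v p', uniq (v :: p') & last v p' = y].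
  move: yS; rewrite inE => /connectP [p pth ylast].
  move: ylast; case: (shortenP pth) => p' pth2 up2 _ ->.
  by exists p'.
have [o' [vo' H]] := rev_path vo pth' up'.
rewrite lst in H.
exists o'; split => //.
have P : forall w, phiv o' w + 2 * (w == v) <= phiv o w.
  move=> w; have [E1 E2] := H w; rewrite /phiv.
  case: (eqVneq w v) => [wv|wv].
    subst w; have yv : (v == y) = false.
      apply/eqP => vy; move: lty; rewrite -vy => lty; move: lty hv; set a := outd o v; set b := ind o v; clear; lia.
    move: E1 E2; rewrite yv !eqxx /=; move: hv; clear; lia.
  case: (eqVneq w y) => [wy|wy].
    subst w; move: E1 E2 lty; rewrite (negbTE wv) !eqxx /=; clear; lia.
  move: E1 E2; rewrite (negbTE wv) (negbTE wy) /= !addn0 => -> ->; lia.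
rewrite /phi (bigD1 v) //= [X in _ < X](bigD1 v) //=.
have := P v; rewrite eqxx => Pv.
have : \sum_(i | i != v) phiv o' i <= \sum_(i | i != v) phiv o i.
  by apply: leq_sum => w _; have := P w; lia.
move: Pv; clear; lia.
Qed.

Definition trO (o : rel V) : rel V := fun a b => o b a.

Lemma trO_valid o : validO o -> validO (trO o).
Proof.
move=> [v1 v2]; split; first by move=> a b /v1; rewrite esym.
by move=> a b eab; rewrite /trO (v2 _ _ eab) negbK.
Qed.

Lemma phi_tr o : phi (trO o) = phi o.
Proof. by rewrite /phi; apply: eq_bigr => w _; rewrite /phiv addnC. Qed.

Lemma balanced_ind n o : validO o -> phi o <= n ->
  exists o', validO o' /\ forall v, outd o' v <= ind o' v + 1 /\ ind o' v <= outd o' v + 1.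
Proof.
elim: n o => [|n IH] o vo hp.
  exists o; split => // v; move: hp; rewrite leqn0 /phi sum_nat_eq0 => /forallP /(_ v).
  rewrite /phiv => /eqP; lia.
case: (boolP [exists v, (ind o v + 2 <= outd o v) || (outd o v + 2 <= ind o v)]).
  case/existsP => v /orP [h|h].
    have [o' [vo' lt]] := step_out vo h.
    by apply: (IH o' vo'); rewrite -ltnS (leq_trans lt hp).
  have [o' [vo' lt]] := @step_out (trO o) v (trO_valid vo) h.
  apply: (IH (trO o') (trO_valid vo')).
  by rewrite phi_tr -ltnS (leq_trans _ hp) // -(phi_tr o).
move/existsPn => H; exists o; split => // v; have := H v; rewrite negb_or -!ltnNge.
by case/andP; lia.
Qed.

End G3.



Lemma deg_sum (V : finType) (e : rel V) (esym : symmetric e) o v :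
  validO e o -> deg e v = outd o v + ind o v.
Proof.
move=> [v1 v2].
rewrite /deg -sum1_card big_mkcond /outd /ind -big_split /=.
apply: eq_bigr => u _; rewrite inN.
case evu: (e v u).
  by rewrite (v2 _ _ evu); case: (o v u).
case ovu: (o v u); first by rewrite (v1 _ _ ovu) in evu.
case ouv: (o u v) => //.
by have := v1 _ _ ouv; rewrite esym evu.
Qed.

Lemma col_mod (x : nat) (b : bool) :
  ((if x %% 3 == 0 then 3 else x %% 3) + 3 * b) %% 3 = x %% 3.
Proof. by case: eqP => H; case: b => /=; lia. Qed.

Lemma col_gt3 (x : nat) (b : bool) :
  (3 < (if x %% 3 == 0 then 3 else x %% 3) + 3 * b) = b.
Proof.
have := ltn_pmod x (isT : 0 < 3).
by case: eqP => H; case: b => /= lt; apply/idP/idP => //; lia.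
Qed.

Lemma col_rng (x : nat) (b : bool) :
  1 <= (if x %% 3 == 0 then 3 else x %% 3) + 3 * b <= 6.
Proof.
have := ltn_pmod x (isT : 0 < 3).
by case: eqP => H; case: b => /= lt; lia.
Qed.

Theorem mainTheorem2 (V : finType) (e : rel V) :
  simple_graph e -> bipartite e -> nice e -> qmSigma_le e 6.
Proof.
move=> [esym eirr] [f hf] hn.
pose g := gg e f.
have gp : forall a b, e a b -> g a != g b := fun a b => @gg_proper _ _ esym f hf a b.
have [r [sr good]] := @fix_all _ _ esym eirr f hf hn #|V| (fun _ _ => 0)
   (fun _ _ => erefl) (max_card _).
pose o0 : rel V := fun a b => e a b && g a.
have vo0 : validO e o0.
  split; first by move=> a b /andP[].
  move=> a b eab; rewrite /o0 esym eab /=.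
  by move: (gp a b eab); case: (g a); case: (g b).
have [o [vo bal]] := @balanced_ind _ _ esym eirr (phi o0) o0 vo0 (leqnn _).
pose bit a b := o a b == g a.
pose c a b := (if r a b %% 3 == 0 then 3 else r a b %% 3) + 3 * bit a b.
have bitsym : forall a b, e a b -> bit a b = bit b a.
  move=> a b eab; rewrite /bit (vo.2 _ _ eab).
  by move: (gp a b eab); case: (g a); case: (g b); case: (o a b).
have cmod : forall v, sigma_c e c v %% 3 = sig e r v %% 3.
  move=> v; rewrite /sigma_c /sig -[LHS]modn_summ -[RHS]modn_summ; congr (_ %% 3).
  by apply: eq_bigr => u _; rewrite /c col_mod.
exists c; split.
- split.
    by move=> a b eab; rewrite /c sr bitsym.
  by move=> a b _; rewrite /c col_rng.
- move=> v i.
  pose K := if g v == (3 < i) then outd o v else ind o v.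
  apply: (@leq_trans K).
    rewrite -sum1_card big_mkcond /K.
    have pt : forall u, (if u \in [set u in nbhd e v | c v u == i] then 1 else 0)
        <= (if g v == (3 < i) then (o v u : nat) else (o u v : nat)).
      move=> u; case: ifP => //; rewrite !inE => /andP[evu /eqP ci].
      have bi : bit v u = (3 < i) by rewrite -ci /c col_gt3.
      move: bi; rewrite /bit (vo.2 _ _ evu).
      by case: (o v u); case: (g v); case: (3 < i).
    case: ifP => gi; apply: leq_sum => u _; have := pt u; by rewrite gi.
  rewrite (deg_sum esym v vo) uphalfE -divn2 /K.
  have := bal v; case: ifP => _; lia.
- move=> a b eab.
  have ga := gp a b eab.
  have da : 0 < deg e a by apply/card_gt0P; exists b; rewrite inN.
  have db : 0 < deg e b by apply/card_gt0P; exists a; rewrite inN esym.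
  move=> E; have : sig e r a %% 3 = sig e r b %% 3 by rewrite -!cmod E.
  have := good a; have := good b; rewrite /bad -/g.
  move: ga; case: (g a); case: (g b) => //= _; rewrite ?da ?db /=.
    by rewrite negbK => /eqP -> /eqP.
  by move=> /eqP nb /negPn /eqP za; rewrite za => H; apply: nb; rewrite -H.
Qed.
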